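(* Let $X$ be an instance set, $f:X\to\mathcal{F}$ a feature map with $\mathcal{F}$ finite, $\mathcal{A}$ a set of algorithms with performance measure $\mathrm{cost}:\mathcal{A}\times X\to\mathbb{R}$ such that the class $\{x\mapsto\mathrm{cost}(A,x):A\in\mathcal{A}\}$ has pseudo-dimension $d$, and $\mathcal{G}$ a set of maps $g:\mathcal{F}\to\mathcal{A}$. Then the class $\{x\mapsto \mathrm{cost}(g(f(x)),x): g\in\mathcal{G}\}$ has pseudo-dimension at most $|\mathcal{F}|\,d$.
   Context: Pseudo-dimension: a finite set $\{x_1,\dots,x_m\}$ is shattered by a class $\mathcal{H}$ of real functions if there exist reals $r_i$ such that for every $T\subseteq\{1,\dots,m\}$ some $h\in\mathcal{H}$ has $h(x_i)>r_i\iff i\in T$; the pseudo-dimension is the largest size of a shattered set. *)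

(* Defs.v *)
From Stdlib Require Import Reals List.
Open Scope R_scope.

Definition fclass (X : Type) := (X -> R) -> Prop.

Definition shatters_size {X : Type} (H : fclass X) (m : nat) : Prop :=
  exists x : nat -> X,
    (forall i j, (i < m)%nat -> (j < m)%nat -> x i = x j -> i = j) /\
    exists r : nat -> R,
      forall T : nat -> bool,
        exists h, H h /\
          forall i, (i < m)%nat -> (h (x i) > r i <-> T i = true).

Definition pdim_eq {X : Type} (H : fclass X) (d : nat) : Prop :=
  shatters_size H d /\ forall m, shatters_size H m -> (m <= d)%nat.

Definition pdim_le {X : Type} (H : fclass X) (d : nat) : Prop :=
  forall m, shatters_size H m -> (m <= d)%nat.

Definition cost_class {X Alg : Type} (Algs : Alg -> Prop) (cost : Alg -> X -> R)
  : fclass X := fun h => exists a, Algs a /\ h = cost a.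

Definition composed_class {X Feat Alg : Type} (f : X -> Feat)
  (cost : Alg -> X -> R) (G : (Feat -> Alg) -> Prop) : fclass X :=
  fun h => exists g, G g /\ h = (fun x => cost (g (f x)) x).

(* Main.v *)
Require Import Defs.
From Stdlib Require Import Reals List.
From Stdlib Require Import Lia ClassicalEpsilon.
Open Scope R_scope.
Open Scope nat_scope.

Fixpoint cnt (k : nat -> nat) (j m : nat) : nat :=
  match m with 0 => 0 | S m' => (cnt k j m' + (if Nat.eqb (k m') j then 1 else 0))%nat end.
Fixpoint idx (k : nat -> nat) (j m : nat) : list nat :=
  match m with 0 => nil | S m' => idx k j m' ++ (if Nat.eqb (k m') j then m' :: nil else nil) end.

Lemma idx_len k j m : length (idx k j m) = cnt k j m.
Proof.
  induction m; simpl; auto. rewrite length_app, IHm. destruct (Nat.eqb (k m) j); simpl; lia.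
Qed.

Lemma idx_spec k j m : forall t, (t < cnt k j m)%nat ->
  (nth t (idx k j m) 0 < m)%nat /\ k (nth t (idx k j m) 0) = j /\
  cnt k j (nth t (idx k j m) 0) = t.
Proof.
  induction m; simpl; intros t Ht; [lia|].
  destruct (Nat.lt_ge_cases t (cnt k j m)) as [Hl|Hg].
  - rewrite app_nth1 by (rewrite idx_len; lia).
    destruct (IHm t Hl) as (A&B&C). repeat split; auto.
  - destruct (Nat.eqb (k m) j) eqn:E; [|lia].
    apply Nat.eqb_eq in E.
    rewrite app_nth2 by (rewrite idx_len; lia). rewrite idx_len.
    replace (t - cnt k j m)%nat with 0%nat by lia. simpl. repeat split; auto; lia.
Qed.

Fixpoint sumL (F : nat -> nat) (L : nat) : nat :=
  match L with 0 => 0 | S L' => (sumL F L' + F L')%nat end.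

Lemma sumL_ext F1 F2 L : (forall j, (j < L)%nat -> F1 j = F2 j) -> sumL F1 L = sumL F2 L.
Proof. induction L; simpl; intros H; auto. rewrite IHL, H; auto. Qed.

Lemma sumL_add F1 F2 L : sumL (fun j => F1 j + F2 j)%nat L = (sumL F1 L + sumL F2 L)%nat.
Proof. induction L; simpl; auto. rewrite IHL; lia. Qed.

Lemma sumL_zero a L : (L <= a)%nat -> sumL (fun j => if Nat.eqb a j then 1 else 0)%nat L = 0%nat.
Proof.
  induction L; simpl; intros H; auto. rewrite IHL by lia.
  destruct (Nat.eqb a L) eqn:E; [apply Nat.eqb_eq in E; lia | auto].
Qed.

Lemma sumL_one a L : (a < L)%nat -> sumL (fun j => if Nat.eqb a j then 1 else 0)%nat L = 1%nat.
Proof.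
  induction L; simpl; intros H; [lia|].
  destruct (Nat.eq_dec a L) as [->|Hn].
  - rewrite sumL_zero by lia. rewrite Nat.eqb_refl. auto.
  - rewrite IHL by lia. apply Nat.eqb_neq in Hn. rewrite Hn. auto.
Qed.

Lemma sum_cnt k L m : (forall i, (i < m)%nat -> (k i < L)%nat) ->
  sumL (fun j => cnt k j m) L = m.
Proof.
  induction m; simpl; intros H.
  - clear H. induction L; simpl in *; lia.
  - rewrite sumL_add. rewrite IHm by (intros; apply H; lia).
    rewrite sumL_one by (apply H; lia). lia.
Qed.

Lemma sum_le F L d : (forall j, (j < L)%nat -> (F j <= d)%nat) -> (sumL F L <= L * d)%nat.
Proof. induction L; simpl; intros H; auto. assert (A := H L). assert (B : sumL F L <= L * d) by (apply IHL; auto). lia. Qed.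

Fixpoint pos {A : Type} (y : A) (l : list A) : nat :=
  match l with nil => 0 | a :: l' =>
    if excluded_middle_informative (a = y) then 0 else S (pos y l') end.

Lemma pos_spec {A : Type} (y y0 : A) l : In y l -> (pos y l < length l)%nat /\ nth (pos y l) l y0 = y.
Proof.
  induction l; simpl; intros H; [contradiction|].
  destruct (excluded_middle_informative (a = y)) as [e|n].
  - split; auto; lia.
  - destruct H as [H|H]; [contradiction|]. destruct (IHl H). split; auto; lia.
Qed.

Open Scope R_scope.

Theorem mainTheorem5
  (X Feat Alg : Type) (f : X -> Feat)
  (enumF : list Feat) (enumF_nodup : NoDup enumF)
  (enumF_full : forall y : Feat, In y enumF)
  (Algs : Alg -> Prop) (cost : Alg -> X -> R) (d : nat)
  (hd : pdim_eq (cost_class Algs cost) d)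
  (G : (Feat -> Alg) -> Prop)
  (hG : forall g, G g -> forall y, Algs (g y)) :
  pdim_le (composed_class f cost G) (length enumF * d).
Proof.
  intros m [x [Hinj [r Hsh]]].
  destruct m as [|m']; [lia|].
  set (m := S m').
  set (y0 := f (x 0%nat)).
  set (k := fun i => pos (f (x i)) enumF).
  set (L := length enumF).
  assert (Hk : forall i, (k i < L)%nat /\ nth (k i) enumF y0 = f (x i))
    by (intro i; apply pos_spec; auto).
  rewrite <- (sum_cnt k L m) by (intros; apply Hk).
  apply sum_le. intros j Hj.
  destruct hd as [_ hmax]. apply hmax.
  set (c := cnt k j m).
  set (ix := fun t => nth t (idx k j m) 0%nat).
  exists (fun t => x (ix t)). split.
  - intros t t' Ht Ht' E. apply Hinj in E.
    + destruct (idx_spec k j m t Ht) as (_&_&C1).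
      destruct (idx_spec k j m t' Ht') as (_&_&C2).
      unfold ix in E. rewrite <- C1, <- C2, E. auto.
    + apply (idx_spec k j m t Ht).
    + apply (idx_spec k j m t' Ht').
  - exists (fun t => r (ix t)). intros T'.
    destruct (Hsh (fun i => if Nat.eqb (k i) j then T' (cnt k j i) else false)) as [h [[g [Gg Hh]] Hsp]].
    exists (cost (g (nth j enumF y0))). split.
    + exists (g (nth j enumF y0)). split; auto.
    + intros t Ht. destruct (idx_spec k j m t Ht) as (A&B&C).
      specialize (Hsp (ix t) A). unfold ix in *. rewrite B, Nat.eqb_refl, C in Hsp.
      rewrite Hh in Hsp. cbv beta in Hsp.
      pose proof (proj2 (Hk (nth t (idx k j m) 0%nat))) as E.
      rewrite B in E. rewrite E. exact Hsp.
Qed.
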